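(* Let $x\ge y\ge 1$. The maximum possible number of orderings of the tasks in an $(x,y)$ task-dependency graph of order $n$ is: $n!$ for $n=x$ (in which case $x=y$); $\frac{(x+1)!}{x-y+2}$ for $n=x+1$; $\frac{(x+2)!}{2(x-y+2)}$ for $n=x+2$ and $y>1$; and $\frac{(x+2)!}{2(x-y+3)}$ for $n=x+2$ and $y=1$. Moreover, the maximum possible number of orderings of the tasks in a $(1,1)$ task-dependency graph of order $n$ is $(n-2)!$ for $n\ge 2$.
   Context: A task-dependency graph is a finite directed acyclic graph (no loops, no multiple edges) whose vertices are called tasks. A vertex is initial if it has in-degree $0$ and terminal if it has out-degree $0$ (an isolated vertex is both). An $(x,y)$ task-dependency graph has exactly $x$ initial and exactly $y$ terminal vertices. The order is the number of vertices. An ordering of the tasks is a linear ordering of all vertices such that for every edge $(u,v)$, $u$ precedes $v$ (a topological ordering). *)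

(* Defs.v *)
From mathcomp Require Import all_boot all_fingroup.
Set Implicit Arguments. Unset Strict Implicit. Unset Printing Implicit Defensive.

(* A task-dependency graph of order n: vertices 'I_n, directed edges given by
   a relation e (so no multiple edges), no loops, no directed cycles. *)
Definition is_dag (n : nat) (e : rel 'I_n) : Prop :=
  (forall v, ~~ e v v) /\ (forall u v, e u v -> ~~ connect e v u).

Definition initial_vertices (n : nat) (e : rel 'I_n) : {set 'I_n} :=
  [set v | [forall u, ~~ e u v]].
Definition terminal_vertices (n : nat) (e : rel 'I_n) : {set 'I_n} :=
  [set v | [forall u, ~~ e v u]].

Definition is_tdg (n x y : nat) (e : rel 'I_n) : Prop :=
  is_dag e /\ #|initial_vertices e| = x /\ #|terminal_vertices e| = y.

(* An ordering of the tasks: a bijection s assigning to each vertex its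
   position, such that every edge (u,v) has u before v. *)
Definition orderings (n : nat) (e : rel 'I_n) : {set {perm 'I_n}} :=
  [set s : {perm 'I_n} | [forall u, forall v, e u v ==> (s u < s v)]].

Definition is_max_orderings (n x y v : nat) : Prop :=
  (exists e : rel 'I_n, is_tdg x y e /\ #|orderings e| = v) /\
  (forall e : rel 'I_n, is_tdg x y e -> #|orderings e| <= v).

(* Main.v *)
Require Import Defs.
From mathcomp Require Import all_boot all_fingroup zify.
Set Implicit Arguments. Unset Strict Implicit. Unset Printing Implicit Defensive.

Definition cmpd (d : bool) (a b : nat) := if d then a < b else b < a.

Definition ext n (d : bool) (s : {perm 'I_n}) (S : {set 'I_n}) (w : 'I_n) : bool :=
  [forall v in S, (v != w) ==> cmpd d (s v) (s w)].

Lemma extP n d (s : {perm 'I_n}) (S : {set 'I_n}) w :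
  reflect (forall v, v \in S -> v != w -> cmpd d (s v) (s w)) (ext d s S w).
Proof.
apply: (iffP forall_inP) => H v vS; first by move=> vw; move: (H v vS) => /implyP; apply.
by apply/implyP; apply: H.
Qed.

Lemma ordP n (e : rel 'I_n) s :
  (s \in orderings e) <-> (forall u v, e u v -> s u < s v).
Proof.
rewrite inE; split => [/forallP H u v euv | H].
  by move: (H u) => /forallP /(_ v) /implyP; apply.
by apply/forallP => u; apply/forallP => v; apply/implyP; apply: H.
Qed.

Lemma tperm_in n (S : {set 'I_n}) u v z : u \in S -> v \in S -> z \in S -> tperm u v z \in S.
Proof. by move=> uS vS zS; case: tpermP. Qed.

Lemma ext_tperm n d (s : {perm 'I_n}) (S : {set 'I_n}) w v :
  w \in S -> v \in S -> ext d s S w -> ext d (tperm w v * s)%g S v.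
Proof.
move=> wS vS /extP H; apply/extP => u uS uv.
rewrite !permM tpermR; apply: H; first exact: tperm_in.
by rewrite (canF_eq (tpermK w v)) tpermL.
Qed.

Lemma tpermss n (u v : 'I_n) (s : {perm 'I_n}) : (tperm u v * (tperm u v * s))%g = s.
Proof. by rewrite mulgA tperm2 mul1g. Qed.

Lemma ext_inv1_aux n d (s : {perm 'I_n}) (S : {set 'I_n}) w u v :
  u \in S -> v \in S -> u != w -> v != w -> ext d s S w -> ext d (tperm u v * s)%g S w.
Proof.
move=> uS vS uw vw /extP H; apply/extP => z zS zw.
rewrite !permM (tpermD uw vw) //; apply: H; first exact: tperm_in.
by rewrite (canF_eq (tpermK u v)) tpermD.
Qed.

Lemma ext_inv1 n d (s : {perm 'I_n}) (S : {set 'I_n}) w u v :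
  u \in S -> v \in S -> u != w -> v != w -> ext d (tperm u v * s)%g S w = ext d s S w.
Proof.
move=> uS vS uw vw; apply/idP/idP; last exact: ext_inv1_aux.
by move/(ext_inv1_aux uS vS uw vw); rewrite tpermss.
Qed.

Lemma ext_inv2 n d (s : {perm 'I_n}) (S : {set 'I_n}) w u v :
  u \notin S -> v \notin S -> u != w -> v != w -> ext d (tperm u v * s)%g S w = ext d s S w.
Proof.
move=> uS vS uw vw; rewrite /ext; apply: eq_forallb_in => z zS.
have uz : u != z by apply: contraNneq uS => ->.
have vz : v != z by apply: contraNneq vS => ->.
by rewrite !permM (tpermD uw vw) (tpermD uz vz).
Qed.

Lemma card_sep (T : finType) (S : {set T}) (P : pred T) :
  #|[set v in S | P v]| = \sum_(v in S) (P v : nat).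
Proof.
rewrite -sum1_card big_mkcond [RHS]big_mkcond /=; apply: eq_bigr => i _.
by rewrite !inE; case: (i \in S); case: (P i).
Qed.

Lemma ext_unique n d (s : {perm 'I_n}) (S : {set 'I_n}) v1 v2 :
  v1 \in S -> v2 \in S -> ext d s S v1 -> ext d s S v2 -> v1 = v2.
Proof.
move=> h1 h2 /extP H1 /extP H2; apply/eqP/negPn/negP => ne.
have := H1 _ h2; have := H2 _ h1; rewrite /cmpd.
move: (ne); rewrite eq_sym => ne'.
by move=> /(_ ne') a /(_ ne') b; move: a b; clear H1 H2; case: d; lia.
Qed.

Lemma ext_exists n d (s : {perm 'I_n}) (S : {set 'I_n}) w : w \in S -> exists2 v, v \in S & ext d s S v.
Proof.
move=> wS; case: d.
- case: (arg_maxnP (fun i => val (s i)) wS) => i iS Hi.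
  exists i => //; apply/extP => v vS vi; rewrite /cmpd ltn_neqAle; apply/andP; split; last exact: Hi.
  by rewrite val_eqE (inj_eq perm_inj).
- case: (arg_minnP (fun i => val (s i)) wS) => i iS Hi.
  exists i => //; apply/extP => v vS vi; rewrite /cmpd ltn_neqAle; apply/andP; split; last exact: Hi.
  by rewrite val_eqE (inj_eq perm_inj) eq_sym.
Qed.

Lemma sym_count n d (S : {set 'I_n}) (Q : {set {perm 'I_n}}) w :
  w \in S -> (forall u v s, u \in S -> v \in S -> ((tperm u v * s)%g \in Q) = (s \in Q)) ->
  #|[set s in Q | ext d s S w]| * #|S| = #|Q|.
Proof.
move=> wS HQ.
have le : forall w1 w2, w1 \in S -> w2 \in S ->
   #|[set s in Q | ext d s S w1]| <= #|[set s in Q | ext d s S w2]|.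
  move=> w1 w2 h1 h2.
  rewrite -(card_imset _ (mulgI (tperm w1 w2))); apply: subset_leq_card.
  apply/subsetP => _ /imsetP [s sQ ->]; move: sQ; rewrite !inE => /andP [sQ es].
  by rewrite HQ // sQ ext_tperm.
have E1 : forall s, \sum_(v in S) (ext d s S v : nat) = 1.
  move=> s; rewrite -card_sep; apply/eqP/cards1P.
  case: (ext_exists d s wS) => v vS ev; exists v; apply/setP => z; rewrite !inE.
  apply/idP/idP => [/andP [zS ez] | /eqP ->]; last by rewrite vS ev.
  by apply/eqP; apply: ext_unique ez ev.
have -> : #|Q| = \sum_(s in Q) \sum_(v in S) (ext d s S v : nat).
  by rewrite -sum1_card; apply: eq_bigr => s _; rewrite E1.
rewrite exchange_big /=.
rewrite (eq_bigr (fun _ => #|[set s in Q | ext d s S w]|)); last first.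
  move=> v vS; rewrite -card_sep; apply/eqP; rewrite eqn_leq !le //.
by rewrite sum_nat_const mulnC.
Qed.
Arguments ordP {n e s}.
Lemma ordE1 n (e : rel 'I_n) s : s \in orderings e -> forall u v, e u v -> s u < s v.
Proof. exact: ordP.1. Qed.


Lemma card_lt n k : k <= n -> #|[set u : 'I_n | u < k]| = k.
Proof.
move=> kn.
have -> : [set u : 'I_n | u < k] = widen_ord kn @: [set: 'I_k].
  apply/setP => u; rewrite !inE; apply/idP/imsetP => [uk | [v _ ->]]; last by rewrite /= ltn_ord.
  by exists (Ordinal uk) => //; apply/val_inj.
have wi : injective (widen_ord kn) by move=> a b [] /val_inj.
by rewrite (card_imset _ wi) cardsT card_ord.
Qed.

Lemma sym_countT n d (S : {set 'I_n}) w :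
  w \in S -> #|[set s | ext d s S w]| * #|S| = n`!.
Proof.
move=> wS; rewrite -card_Sn -cardsT -(sym_count d (Q := [set: {perm 'I_n}]) wS); last by move=> *; rewrite !inE.
by congr (_ * _); apply: eq_card => s; rewrite !inE.
Qed.

Lemma initialP n (e : rel 'I_n) v :
  reflect (forall u, ~~ e u v) (v \in initial_vertices e).
Proof. by rewrite inE; apply: forallP. Qed.

Lemma terminalP n (e : rel 'I_n) v :
  reflect (forall u, ~~ e v u) (v \in terminal_vertices e).
Proof. by rewrite inE; apply: forallP. Qed.

Lemma edge_ninit n (e : rel 'I_n) u v : e u v -> v \notin initial_vertices e.
Proof. by move=> euv; apply/initialP => /(_ u); rewrite euv. Qed.

Lemma rank_dag n (e : rel 'I_n) (r : 'I_n -> nat) :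
  (forall u v, e u v -> r u < r v) -> is_dag e.
Proof.
move=> H; split=> [v | u v euv]; first by apply/negP => /H; rewrite ltnn.
apply/negP => /connectP [p pth lst].
have key : forall p z, path e z p -> r z <= r (last z p).
  elim=> [|a q IH] z //= /andP [eza pq].
  by apply: leq_trans (ltnW (H _ _ eza)) (IH _ pq).
have := key _ _ pth; rewrite -lst => h.
by have := H _ _ euv; lia.
Qed.

Lemma no_loop n (e : rel 'I_n) v : is_dag e -> ~~ e v v.
Proof. by case=> H _; apply: H. Qed.

Lemma no_2cycle n (e : rel 'I_n) u v : is_dag e -> e u v -> ~~ e v u.
Proof.
case=> _ H euv; apply/negP => evu; move: (H _ _ euv); rewrite connect1 //.
Qed.

Lemma max_from n x y c N :
  0 < c ->
  (exists e0 : rel 'I_n, is_tdg x y e0 /\ #|orderings e0| * c = N) ->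
  (forall e : rel 'I_n, is_tdg x y e -> #|orderings e| * c <= N) ->
  exists v, is_max_orderings n x y v /\ v * c = N.
Proof.
move=> c0 [e0 [t0 h0]] H; exists #|orderings e0|; split=> //; split; first by exists e0.
by move=> e te; rewrite -(leq_pmul2r c0) h0 H.
Qed.

Lemma card_orderings_le n (e : rel 'I_n) : #|orderings e| <= n`!.
Proof. by rewrite -card_Sn; apply: max_card. Qed.


Lemma part_nx x y (e : rel 'I_x) : is_tdg x y e -> y = x.
Proof.
case=> dag [hI hT].
have IT : initial_vertices e = setT.
  by apply/eqP; rewrite eqEcard subsetT cardsT card_ord hI leqnn.
have TT : terminal_vertices e = setT.
  apply/setP => v; rewrite in_setT; apply/terminalP => u; apply/negP => evu.
  by move: (edge_ninit evu); rewrite IT inE.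
by rewrite -hT TT cardsT card_ord.
Qed.

Lemma part_xx x : is_max_orderings x x x x`!.
Proof.
split; last by move=> e _; apply: card_orderings_le.
exists [rel u v : 'I_x | false]; split; first split.
- by apply: (@rank_dag _ _ (fun _ => 0)).
- split.
  + have -> : initial_vertices [rel u v : 'I_x | false] = setT.
      by apply/setP => v; rewrite !inE; apply/forallP.
    by rewrite cardsT card_ord.
  + have -> : terminal_vertices [rel u v : 'I_x | false] = setT.
      by apply/setP => v; rewrite !inE; apply/forallP.
    by rewrite cardsT card_ord.
- have -> : orderings [rel u v : 'I_x | false] = setT.
    by apply/setP => s; rewrite in_setT; apply/ordP.
  by rewrite cardsT card_Sn.
Qed.

Lemma part_x1 x y : 1 <= y <= x ->
  exists v, is_max_orderings x.+1 x y v /\ v * (x - y + 2) = x.+1`!.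
Proof.
move=> /andP [y1 yx]; apply: max_from; first by rewrite addn2.
- pose k := x - y + 1; have kE : k = x - y + 1 by [].
  pose e0 : rel 'I_x.+1 := [rel u v | (v == ord_max) && (u < k)].
  have Ini : initial_vertices e0 = [set~ ord_max].
    apply/setP => v; rewrite !inE; apply/forallP/idP => [H | vn u].
    + apply/negP => /eqP vm; move: (H ord0); rewrite /e0 /= vm eqxx /=; lia.
    + by rewrite /e0 /= (negbTE vn).
  have Ter : terminal_vertices e0 = ~: [set u : 'I_x.+1 | u < k].
    apply/setP => v; rewrite !inE; apply/forallP/idP => [H | vk u].
    + by apply/negP => vk; move: (H ord_max); rewrite /e0 /= eqxx vk.
    + by rewrite /e0 /= negb_and vk orbT.
  have Ord : orderings e0 = [set s | ext true s (ord_max |: [set u : 'I_x.+1 | u < k]) ord_max].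
    apply/setP => s; rewrite [in RHS]inE; apply/idP/idP => [/ordE1 H | /extP H].
    + apply/extP => v; rewrite !inE => /orP [/eqP -> | vk]; first by rewrite eqxx.
      by move=> _; apply: H; rewrite /e0 /= eqxx vk.
    + apply/ordP => u v; rewrite /e0 /= => /andP [/eqP -> uk]; apply: H; first by rewrite !inE uk orbT.
      by apply/eqP => ue; move: uk; rewrite ue /=; lia.
  exists e0; split; first split.
  + apply: (@rank_dag _ _ val) => u v; rewrite /e0 /= => /andP [/eqP -> uk]; rewrite /=; lia.
  + split; first by rewrite Ini cardsC1 card_ord.
    rewrite Ter cardsCs setCK card_ord card_lt; lia.
  + rewrite Ord; have := sym_countT true (setU11 ord_max [set u : 'I_x.+1 | u < k]).
    rewrite cardsU1 card_lt; last by lia.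
    rewrite inE /= ltnNge; have -> : k <= x by lia.
    by move=> <-; congr (_ * _); lia.
- move=> e [dag [hI hT]].
  have c1 : #|~: initial_vertices e| == 1.
    by have := cardsC (initial_vertices e); rewrite hI card_ord => h; apply/eqP; lia.
  case/cards1P: c1 => w Hw.
  have Ew : forall u v, e u v -> v = w.
    by move=> u v /edge_ninit; rewrite -in_setC Hw inE => /eqP.
  set Na := [set u | e u w].
  have wNa : w \notin Na by rewrite inE no_loop.
  have sub : orderings e \subset [set s | ext true s (w |: Na) w].
    apply/subsetP => s /ordE1 H; rewrite inE; apply/extP => v.
    rewrite !inE => /orP [/eqP -> | evw]; first by rewrite eqxx.
    by move=> _; exact: H.
  have cnt := sym_countT true (setU11 w Na).
  rewrite cardsU1 wNa in cnt.
  have Tsub : ~: Na \subset terminal_vertices e.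
    apply/subsetP => v vNa; apply/terminalP => u; apply/negP => evu.
    by move: (Ew _ _ evu) => uw; subst u; move: vNa; rewrite in_setC inE evu.
  have h1 : #|~: Na| <= y by rewrite -hT; apply: subset_leq_card.
  have h2 : #|Na| + #|~: Na| = x.+1 by rewrite cardsC card_ord.
  have h3 := subset_leq_card sub.
  rewrite -cnt; apply: leq_mul => //; rewrite add1n; clearbody Na; move: h1 h2 yx; clear; move=> h1 h2 yx; move: (#|Na|) (#|~: Na|) h1 h2 => a b h1 h2. lia.
Qed.


Definition X11 n (src sink : 'I_n) : {set {perm 'I_n}} :=
  [set s in [set s | ext true s setT sink] | ext false s (~: [set sink]) src].

Lemma count11 k (src sink : 'I_k.+2) : src != sink -> #|X11 src sink| = k`!.
Proof.
move=> ne.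
have h1 := sym_countT true (in_setT sink).
have h2 : #|X11 src sink| * #|~: [set sink]| = #|[set s | ext true s setT sink]|.
  apply: sym_count; first by rewrite !inE.
  move=> u v s; rewrite !inE => us vs; rewrite ext_inv1 // inE.
rewrite cardsT card_ord in h1; rewrite cardsC1 card_ord /= in h2.
rewrite -h2 !factS in h1.
move: h1; rewrite [k.+2 * _]mulnC.
by move/eqP; rewrite eqn_mul2r /= [k.+1 * _]mulnC eqn_mul2r /= => /eqP.
Qed.

Lemma part_11 n : 2 <= n -> is_max_orderings n 1 1 (n - 2)`!.
Proof.
case: n => [|[|k]] // _; rewrite !subSS subn0.
split.
- pose e0 : rel 'I_k.+2 := [rel u v | ((u == ord0) && (v != ord0)) || ((v == ord_max) && (u != ord_max))].
  have n0m : (ord0 : 'I_k.+2) != ord_max by [].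
  exists e0; split; first split.
  + apply: (@rank_dag _ _ val) => u v; rewrite /e0 /= => /orP [/andP [/eqP -> v0] | /andP [/eqP -> um]].
    * by rewrite lt0n.
    * by rewrite ltn_neqAle -ltnS ltn_ord andbT.
  + split.
    * have -> : initial_vertices e0 = [set ord0].
        apply/setP => v; rewrite [RHS]inE; apply/initialP/idP => [H | /eqP -> u].
        - apply/negPn/negP => v0; move: (H ord0). by rewrite /e0 /= v0.
        - by rewrite /e0 /= andbF.
      by rewrite cards1.
    * have -> : terminal_vertices e0 = [set ord_max].
        apply/setP => v; rewrite [RHS]inE; apply/terminalP/idP => [H | /eqP -> u].
        - apply/negPn/negP => vm; move: (H ord_max); by rewrite /e0 /= vm (@eqxx _ ord_max) orbT.
        - by rewrite /e0 /= (@eqxx _ ord_max) andbF.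
      by rewrite cards1.
  + rewrite -(count11 n0m); apply: eq_card => s.
    rewrite /X11 [in RHS]inE [in RHS]inE. apply/idP/idP => [/ordE1 H | /andP [/extP H1 /extP H2]].
    * apply/andP; split; apply/extP => v.
      - by move=> _ vm; apply: H; rewrite /e0 /= (@eqxx _ ord_max) vm orbT.
      - by move=> _ v0; apply: H; rewrite /e0 /= v0.
    * apply/ordP => u v; rewrite /e0 /= => /orP [/andP [/eqP -> v0] | /andP [/eqP -> um]].
      - case: (eqVneq v ord_max) => [-> | vm]; first by apply: H1; rewrite ?inE.
        by apply: H2; rewrite ?inE // eq_sym.
      - by apply: H1; rewrite ?inE.
- move=> e [dag [hI hT]].
  move/eqP: hI => /cards1P [src hI]; move/eqP: hT => /cards1P [sink hT].
  have C1 : forall s, s \in orderings e -> forall m v, s v < m -> v = src \/ s src < s v.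
    move=> s so; elim=> [//|m IH] v vm.
    case: (boolP (v \in initial_vertices e)) => [| vI]; first by rewrite hI inE => /eqP; left.
    move: vI; rewrite inE negb_forall => /existsP [u]; rewrite negbK => euv.
    have su := ordE1 so euv.
    case: (IH u); first by lia.
      by move=> us; subst u; right.
    by move=> h; right; lia.
  have C2 : forall s, s \in orderings e -> forall m v, k.+2 - s v < m -> v = sink \/ s v < s sink.
    move=> s so; elim=> [//|m IH] v vm.
    case: (boolP (v \in terminal_vertices e)) => [| vI]; first by rewrite hT inE => /eqP; left.
    move: vI; rewrite inE negb_forall => /existsP [u]; rewrite negbK => euv.
    have su := ordE1 so euv.
    have su2 := ltn_ord (s u).
    case: (IH u); first by lia.
      by move=> us; subst u; right.
    by move=> h; right; lia.
  case: (eqVneq src sink) => [eq | ne].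
    have -> : orderings e = set0; last by rewrite cards0.
    apply/setP => s; rewrite in_set0; apply/negP => so.
    pose v : 'I_k.+2 := if src == ord0 then ord_max else ord0.
    have vs : v != src by rewrite /v; case: (eqVneq src ord0) => [->|h] //; rewrite eq_sym.
    case: (C1 s so (s v).+1 v) => // [/eqP | h1]; first by rewrite (negbTE vs).
    case: (C2 s so k.+3 v) => // [|/eqP | h2]; first by lia.
      by rewrite -eq (negbTE vs).
    by clearbody v; subst sink; lia.
  rewrite -(count11 ne); apply: subset_leq_card; apply/subsetP => s so.
  rewrite !inE; apply/andP; split; apply/extP => v _ vw /=.
  + case: (C2 s so k.+3 v) => //; [lia | by move/eqP; rewrite (negbTE vw)].
  + case: (C1 s so (s v).+1 v) => //; by move/eqP; rewrite (negbTE vw).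
Qed.


Lemma edge_ab n (e : rel 'I_n) (a b : 'I_n) :
  ~: initial_vertices e = [set a; b] -> forall u v, e u v -> (v == a) || (v == b).
Proof. by move=> HC u v /edge_ninit; rewrite -in_setC HC !inE. Qed.

Lemma ninit_edge n (e : rel 'I_n) v : v \notin initial_vertices e -> exists u, e u v.
Proof.
by rewrite inE negb_forall => /existsP [u]; rewrite negbK => h; exists u.
Qed.

Lemma caseB x y (e : rel 'I_x.+2) (a b : 'I_x.+2) :
  is_tdg x y e -> ~: initial_vertices e = [set a; b] -> a != b -> e a b ->
  #|orderings e| * (2 * (x + 3 - y)) <= x.+2`!.
Proof.
move=> [dag [hI hT]] HC ab eab.
have Ev := edge_ab HC.
have [u0 eu0] : exists u0, e u0 a.
  by apply: ninit_edge; rewrite -in_setC HC set21.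
have u0b : u0 != b.
  by apply/eqP => ub; subst u0; move: (no_2cycle dag eab); rewrite eu0.
have u0a : u0 != a.
  by apply/eqP => ua; subst u0; move: (no_loop a dag); rewrite eu0.
pose S1 := b |: ([set u | e u a] :|: [set u | e u b]).
pose Q := [set s | ext true s S1 b].
pose X := [set s in Q | ext true s [set u0; a] a].
have sub : orderings e \subset X.
  apply/subsetP => s so; have H := ordE1 so.
  rewrite !inE; apply/andP; split; apply/extP => v.
  - rewrite !inE => /orP [/eqP -> | /orP [eva | evb]]; first by rewrite eqxx.
    + move=> _ /=; apply: ltn_trans (H _ _ eva) (H _ _ eab).
    + by move=> _; apply: H.
  - by rewrite !inE => /orP [/eqP -> _ | /eqP ->]; [apply: H | rewrite eqxx].
have bS1 : b \in S1 by rewrite !inE eqxx.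
have cQ := sym_countT true bS1.
have cX : #|X| * #|[set u0; a]| = #|Q|.
  apply: sym_count; first by rewrite set22.
  move=> u v s; rewrite !inE => /orP [] /eqP -> /orP [] /eqP ->;
    rewrite ext_inv1 // !inE ?eu0 ?eab ?orbT // eq_sym.
rewrite cards2 u0a in cX.
have Tsub : b |: ~: S1 \subset terminal_vertices e.
  apply/subsetP => v; rewrite in_setU1 => /orP [/eqP -> | vS]; apply/terminalP => w;
    apply/negP => evw; case/orP: (Ev _ _ evw) => /eqP ?; subst w.
  - by move: (no_2cycle dag eab); rewrite evw.
  - by move: (no_loop b dag); rewrite evw.
  - by move: vS; rewrite !inE evw orbT.
  - by move: vS; rewrite !inE evw !orbT.
have h1 : #|b |: ~: S1| <= y by rewrite -hT; apply: subset_leq_card.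
rewrite cardsU1 inE bS1 /= in h1.
have h2 : #|S1| + #|~: S1| = x.+2 by rewrite cardsC card_ord.
have h3 := subset_leq_card sub.
rewrite -cQ -cX.
move: h1 h2 h3; move: (#|S1|) (#|~: S1|) (#|X|) (#|orderings e|) => c1 c2 c3 c4 h1 h2 h3.
rewrite -mulnA; apply: leq_mul => //; lia.
Qed.

Lemma half n (e : rel 'I_n) (a b : 'I_n) :
  is_dag e -> a != b -> ~~ e a b -> ~~ e b a ->
  #|[set s in orderings e | s a < s b]| *
    ((#|[set u | e u a]| + 1) * (#|[set u | e u a || e u b]| + 2)) <= n`!.
Proof.
move=> dag ab nab nba.
pose U := [set u | e u a || e u b].
pose Na := [set u | e u a].
pose S := a |: (b |: U).
pose Q := [set s | ext true s S b].
pose X := [set s in Q | ext true s (a |: Na) a].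
have sub : [set s in orderings e | s a < s b] \subset X.
  apply/subsetP => s; rewrite inE => /andP [so sab]; have H := ordE1 so.
  rewrite !inE; apply/andP; split; apply/extP => v.
  - rewrite !inE => /orP [/eqP -> | /orP [/eqP -> | /orP [eva | evb]]] //; first by rewrite eqxx.
    + move=> _ /=; apply: ltn_trans (H _ _ eva) sab.
    + by move=> _; apply: H.
  - rewrite !inE => /orP [/eqP -> | eva]; first by rewrite eqxx.
    by move=> _; apply: H.
have bS : b \in S by rewrite !inE eqxx orbT.
have cQ := sym_countT true bS.
have cX : #|X| * #|a |: Na| = #|Q|.
  apply: sym_count; first by rewrite setU11.
  have mem : forall u, u \in a |: Na -> (u \in S) && (u != b).
    move=> u; rewrite in_setU1 => /orP [/eqP -> | eua]; rewrite !inE.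
      by rewrite eqxx ab.
    move: eua; rewrite inE => eua.
    rewrite eua !orbT /=; apply/eqP => ub; subst u; by rewrite eua in nba.
  move=> u v s /mem /andP [uS ub] /mem /andP [vS vb].
  by rewrite !inE ext_inv1.
have aNa : a \notin Na by rewrite inE no_loop.
have aU : a \notin b |: U by rewrite !inE negb_or ab /= negb_or no_loop.
have bU : b \notin U by rewrite !inE negb_or nba (no_loop _ dag).
rewrite cardsU1 aNa /= in cX.
rewrite cardsU1 aU /= cardsU1 bU /= in cQ.
have h3 := subset_leq_card sub.
rewrite -cQ -cX.
move: h3; move: (#|Na|) (#|U|) (#|X|) (#|[set s in orderings e | s a < s b]|) => c1 c2 c3 c4 h3.
rewrite -mulnA (_ : (1 + c1) * _ = (c1 + 1) * (c2 + 2)); [exact: leq_mul | lia].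
Qed.

Lemma poly_ineq (p q m : nat) : 1 <= p -> 1 <= q -> m <= p + q -> 2*m*(p+q+2) <= (p+1)*(q+1)*(m+2).
Proof.
move=> hp hq hm.
have h1 : p + q <= p * q + 1 by nia.
case: (leqP (p + q + 3) (p * q)) => hc.
- nia.
- have h2 : (p + q - m) * (p + q + 3 - p * q) >= 0 by [].
  nia.
Qed.

Lemma arith_A (A B C N p q m t : nat) : 1 <= p -> 1 <= q -> m <= p + q -> t <= m ->
  A * ((p + 1) * (m + 2)) <= N -> B * ((q + 1) * (m + 2)) <= N -> C <= A + B ->
  C * (2 * t) <= N.
Proof.
move=> hp hq hm ht hA hB hC.
have P := poly_ineq hp hq hm.
have H1 : C * (2 * t) <= (A + B) * (2 * m) by apply: leq_mul => //; lia.
apply: leq_trans H1 _.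
have pos : 0 < (p + 1) * (q + 1) * (m + 2) by rewrite !addn1 addn2.
rewrite -(leq_pmul2r pos).
have E1 : A * ((p + 1) * (m + 2)) * (2 * m * (q + 1)) <= N * (2 * m * (q + 1)) by apply: leq_mul.
have E2 : B * ((q + 1) * (m + 2)) * (2 * m * (p + 1)) <= N * (2 * m * (p + 1)) by apply: leq_mul.
have E3 : N * (2 * m * (p + q + 2)) <= N * ((p + 1) * (q + 1) * (m + 2)) by apply: leq_mul.
nia.
Qed.

Lemma caseA x y (e : rel 'I_x.+2) (a b : 'I_x.+2) :
  is_tdg x y e -> ~: initial_vertices e = [set a; b] -> a != b -> ~~ e a b -> ~~ e b a ->
  2 <= y /\ #|orderings e| * (2 * (x + 2 - y)) <= x.+2`!.
Proof.
move=> [dag [hI hT]] HC ab nab nba.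
have Ev := edge_ab HC.
have hb := half dag ab nab nba.
have ba : b != a by rewrite eq_sym.
have ha := half dag ba nba nab.
have UU : #|[set u | e u b || e u a]| = #|[set u | e u a || e u b]|.
  by apply: eq_card => u; rewrite !inE orbC.
rewrite UU in ha.
have [ua eua] : exists u, e u a by apply: ninit_edge; rewrite -in_setC HC set21.
have [ub eub] : exists u, e u b by apply: ninit_edge; rewrite -in_setC HC set22.
have hp : 0 < #|[set u | e u a]| by apply/card_gt0P; exists ua; rewrite inE.
have hq : 0 < #|[set u | e u b]| by apply/card_gt0P; exists ub; rewrite inE.
have hm : #|[set u | e u a || e u b]| <= #|[set u | e u a]| + #|[set u | e u b]|.
  have -> : [set u | e u a || e u b] = [set u | e u a] :|: [set u | e u b].
    by apply/setP => u; rewrite !inE.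
  by rewrite cardsU leq_subr.
set U := [set u | e u a || e u b] in ha hb hm *.
have Tsub : ~: U \subset terminal_vertices e.
  apply/subsetP => v vU; apply/terminalP => w; apply/negP => evw.
  by case/orP: (Ev _ _ evw) => /eqP ?; subst w; move: vU; rewrite !inE evw ?orbT.
have h1 : #|~: U| <= y by rewrite -hT; apply: subset_leq_card.
have h2 : #|U| + #|~: U| = x.+2 by rewrite cardsC card_ord.
have h4 : 2 <= #|~: U|.
  have <- : #|[set a; b]| = 2 by rewrite cards2 ab.
  apply: subset_leq_card; apply/subsetP => v.
  rewrite !inE => /orP [] /eqP ->; rewrite negb_or ?nab ?nba (no_loop _ dag) //.
have sub : orderings e \subset [set s in orderings e | s a < s b] :|: [set s in orderings e | s b < s a].
  apply/subsetP => s so; move: (so); rewrite inE => so'; rewrite !inE so' /=.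
  case: (ltngtP (s a) (s b)) => // /val_inj /perm_inj abe.
  by rewrite abe eqxx in ab.
have h5 := subset_leq_card sub.
rewrite cardsU in h5.
split; first by lia.
move: ha hb hm hp hq h1 h2 h4 h5.
move: (#|[set s in orderings e | s a < s b]|) (#|[set s in orderings e | s b < s a]|)
  (#|[set u | e u a]|) (#|[set u | e u b]|) (#|U|) (#|~: U|) (#|orderings e|) => A B p q m c C.
move=> ha hb hm hp hq h1 h2 h4 h5.
apply: (arith_A (A := A) (B := B) (p := p) (q := q) (m := m)) => //; lia.
Qed.


Lemma ordeqE n (u v : 'I_n) : (u == v) = (nat_of_ord u == nat_of_ord v). Proof. by []. Qed.

Lemma constr_B x : 1 <= x ->
  exists e0 : rel 'I_x.+2, is_tdg x 1 e0 /\ #|orderings e0| * (2 * (x - 1 + 3)) = x.+2`!.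
Proof.
move=> x1.
pose a : 'I_x.+2 := Ordinal (leqnSn x.+1).
pose e0 : rel 'I_x.+2 := [rel u v | ((v == a) && (u == ord0)) || ((v == ord_max) && (u != ord0) && (u != ord_max))].
have e0E : forall u v, e0 u v = ((nat_of_ord v == x) && (nat_of_ord u == 0)) || ((nat_of_ord v == x.+1) && (nat_of_ord u != 0) && (nat_of_ord u != x.+1)) by [].
exists e0; split; first split.
- apply: (@rank_dag _ _ (@nat_of_ord _)) => u v; rewrite e0E; have := ltn_ord u; have := ltn_ord v; lia.
- split.
  + have -> : initial_vertices e0 = ~: [set a; ord_max].
      apply/setP => v; rewrite !inE !ordeqE /=; apply/forallP/idP => [H | Hv u].
      * by have := H ord0; have := H a; rewrite !e0E /=; lia.
      * by rewrite e0E; lia.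
    rewrite cardsCs setCK cards2 card_ord ordeqE /=.
    lia.
  + have -> : terminal_vertices e0 = [set ord_max].
      apply/setP => v; rewrite !inE !ordeqE /=; apply/forallP/idP => [H | Hv u].
      * by have := H ord_max; have := H a; have := ltn_ord v; rewrite !e0E /=; lia.
      * by rewrite e0E; lia.
    by rewrite cards1.
- have -> : orderings e0 = [set s in [set s | ext true s setT ord_max] | ext true s [set ord0; a] a].
    apply/setP => s; rewrite [in RHS]inE [in RHS]inE.
    apply/idP/idP => [/ordE1 H | /andP [/extP H1 /extP H2]].
    + apply/andP; split; apply/extP => v.
      * move=> _ vm /=; case: (eqVneq v ord0) => [-> | v0].
          by apply: ltn_trans (H ord0 a _) (H a ord_max _); rewrite e0E /=; lia.
        by apply: H; rewrite e0E; move: vm v0; rewrite !ordeqE /=; have := ltn_ord v; lia.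
      * rewrite !inE => /orP [/eqP -> _ | /eqP ->]; last by rewrite eqxx.
        by apply: H; rewrite e0E /=; lia.
    + apply/ordP => u v; rewrite e0E => /orP [/andP [va u0] | /andP [/andP [vm u0] um]].
      * have -> : v = a by apply/val_inj/eqP.
        have -> : u = ord0 by apply/val_inj/eqP.
        by apply: H2; rewrite ?inE ?eqxx // ordeqE /=; lia.
      * have -> : v = ord_max by apply/val_inj/eqP.
        by apply: H1; rewrite ?inE // ordeqE /=.
  have cQ := sym_countT true (in_setT (ord_max : 'I_x.+2)).
  have cX : #|[set s in [set s | ext true s setT ord_max] | ext true s [set ord0; a] a]| * #|[set ord0; a]|
            = #|[set s | ext true s setT (ord_max : 'I_x.+2)]|.
    apply: sym_count; first by rewrite set22.
    move=> u v s; rewrite !inE !ordeqE /= => hu hv.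
    by rewrite ext_inv1 ?inE // ordeqE /=; lia.
  rewrite cards2 ordeqE /= in cX.
  rewrite (_ : (0 != x) = true) in cX; last by lia.
  rewrite cardsT card_ord in cQ.
  by rewrite -cQ -cX mulnA; congr (_ * _); lia.
Qed.

Lemma constr_A x y : 1 < y -> y <= x ->
  exists e0 : rel 'I_x.+2, is_tdg x y e0 /\ #|orderings e0| * (2 * (x - y + 2)) = x.+2`!.
Proof.
move=> y1 yx.
pose m := x - y + 2; have mE : m = x - y + 2 by []; clearbody m.
pose a : 'I_x.+2 := Ordinal (leqnSn x.+1).
have o1p : 1 < x.+2 by lia.
pose o1 : 'I_x.+2 := Ordinal o1p.
pose e0 : rel 'I_x.+2 := [rel u v | ((v == a) && (u == ord0)) || ((v == ord_max) && (u != ord0) && (u < m))].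
have e0E : forall u v, e0 u v = ((nat_of_ord v == x) && (nat_of_ord u == 0)) || ((nat_of_ord v == x.+1) && (nat_of_ord u != 0) && (nat_of_ord u < m)) by [].
pose S1 := (ord_max : 'I_x.+2) |: ([set u : 'I_x.+2 | u < m] :\ ord0).
exists e0; split; first split.
- apply: (@rank_dag _ _ (@nat_of_ord _)) => u v; rewrite e0E; have := ltn_ord u; have := ltn_ord v; lia.
- split.
  + have -> : initial_vertices e0 = ~: [set a; ord_max].
      apply/setP => v; rewrite !inE !ordeqE /=; apply/forallP/idP => [H | Hv u].
      * by have := H ord0; have := H o1; rewrite !e0E /=; lia.
      * by rewrite e0E; lia.
    rewrite cardsCs setCK cards2 card_ord ordeqE /=.
    lia.
  + have -> : terminal_vertices e0 = ~: [set u : 'I_x.+2 | u < m].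
      apply/setP => v; rewrite !inE; apply/forallP/idP => [H | Hv u].
      * by have := H ord_max; have := H a; have := ltn_ord v; rewrite !e0E /=; lia.
      * by rewrite e0E; lia.
    by rewrite cardsCs setCK card_ord card_lt; lia.
- have -> : orderings e0 = [set s in [set s | ext true s S1 ord_max] | ext true s [set ord0; a] a].
    apply/setP => s; rewrite [in RHS]inE [in RHS]inE.
    apply/idP/idP => [/ordE1 H | /andP [/extP H1 /extP H2]].
    + apply/andP; split; apply/extP => v.
      * rewrite !inE !ordeqE /= => vS vm; apply: H; rewrite e0E /=; move: vS vm; lia.
      * rewrite !inE => /orP [/eqP -> _ | /eqP ->]; last by rewrite eqxx.
        by apply: H; rewrite e0E /=; lia.
    + apply/ordP => u v; rewrite e0E => /orP [/andP [va u0] | /andP [/andP [vm u0] um]].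
      * have -> : v = a by apply/val_inj/eqP.
        have -> : u = ord0 by apply/val_inj/eqP.
        by apply: H2; rewrite ?inE ?eqxx // ordeqE /=; lia.
      * have -> : v = ord_max by apply/val_inj/eqP.
        apply: H1; [rewrite /S1 !inE !ordeqE /=; lia | rewrite ordeqE /=; lia].
  have mS : (ord_max : 'I_x.+2) \in S1 by rewrite !inE eqxx.
  have cQ := sym_countT true mS.
  have cX : #|[set s in [set s | ext true s S1 ord_max] | ext true s [set ord0; a] a]| * #|[set ord0; a]|
            = #|[set s | ext true s S1 (ord_max : 'I_x.+2)]|.
    apply: sym_count; first by rewrite set22.
    move=> u v s; rewrite !inE !ordeqE /= => hu hv.
    by rewrite ext_inv2 ?inE ?ordeqE /=; lia.
  rewrite cards2 ordeqE /= in cX.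
  rewrite (_ : (0 != x) = true) in cX; last by lia.
  have cS : #|S1| = m.
    have hD := cardsD1 ord0 [set u : 'I_x.+2 | u < m].
    rewrite card_lt in hD; last by lia.
    rewrite inE /= in hD.
    rewrite /S1 cardsU1.
    have -> : (ord_max \notin [set u : 'I_x.+2 | u < m] :\ ord0) = true by rewrite !inE /=; lia.
    move: hD; set c := #|[set u : 'I_x.+2 | u < m] :\ ord0|; clearbody c; lia.
  rewrite cS in cQ.
  by rewrite -cQ -cX mulnA; congr (_ * _); lia.
Qed.


Lemma ub_x2 x y (e : rel 'I_x.+2) : is_tdg x y e ->
  #|orderings e| * (2 * (x + 3 - y)) <= x.+2`! \/
  (2 <= y /\ #|orderings e| * (2 * (x + 2 - y)) <= x.+2`!).
Proof.
move=> te; have [dag [hI hT]] := te.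
have c2 : #|~: initial_vertices e| == 2.
  by have := cardsC (initial_vertices e); rewrite hI card_ord => h; apply/eqP; lia.
case/cards2P: c2 => a [b [ab HC]].
case: (boolP (e a b)) => eab; first by left; apply: caseB te HC ab eab.
case: (boolP (e b a)) => eba.
  left; apply: (caseB (a := b) (b := a)) => //; first by rewrite HC setUC.
  by rewrite eq_sym.
by right; apply: caseA te HC ab eab eba.
Qed.

Theorem mainTheorem20 :
  (forall x y : nat, 1 <= y <= x ->
     (forall e : rel 'I_x, is_tdg x y e -> y = x) /\
     (y = x -> is_max_orderings x x y (x`!)) /\
     (exists v, is_max_orderings x.+1 x y v /\ v * (x - y + 2) = (x.+1)`!) /\
     (1 < y -> exists v, is_max_orderings x.+2 x y v /\
                         v * (2 * (x - y + 2)) = (x.+2)`!) /\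
     (y = 1 -> exists v, is_max_orderings x.+2 x y v /\
                         v * (2 * (x - y + 3)) = (x.+2)`!)) /\
  (forall n : nat, 2 <= n -> is_max_orderings n 1 1 ((n - 2)`!)).
Proof.
split; last exact: part_11.
move=> x y hyx; have /andP [y1 yx] := hyx.
split; first by move=> e; apply: part_nx.
split; first by move=> ->; apply: part_xx.
split; first exact: part_x1.
split.
- move=> y2; apply: max_from; first by lia.
    exact: constr_A.
  move=> e te; case: (ub_x2 te) => [h | [_ h]].
    apply: leq_trans h; apply: leq_mul => //; lia.
  by apply: leq_trans h; apply: leq_mul => //; lia.
- move=> y1'; subst y; apply: max_from; first by lia.
    exact: constr_B.
  move=> e te; case: (ub_x2 te) => [h | [h _]]; last by lia.
  by apply: leq_trans h; apply: leq_mul => //; lia.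
Qed.
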